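(* Let $x^0, x^1, x^2, \ldots \in \mathbb{R}^m$ be a sequence of vectors and suppose there is a constant $B>0$ with $\|x^n\|_2^2 \le B$ for every $n$. For each $n\ge 1$ let $X^{n-1}\in\mathbb{R}^{n\times m}$ be the matrix whose rows are $(x^0)^T,\ldots,(x^{n-1})^T$. Suppose that for some (large enough) $N'$ the matrix $X^{N'-1}$ satisfies the sparse Riesz condition $\mathrm{SRC}(r,c_*,c^* )$. Let $c>1$ be a constant. Then for every integer $n'$ with $N'<n'\le cN'$, the matrix $X^{n'-1}$ satisfies $\mathrm{SRC}(r, c_*/c, \max(c^*,B))$.
   Context: The coordinate index set $\{1,\ldots,m\}$ is partitioned into nonoverlapping groups $\mathcal{G}_1,\ldots,\mathcal{G}_p$ with $d_j=|\mathcal{G}_j|$. For a set $\mathcal{S}\subset\{1,\ldots,p\}$ of group indices, $X_{*\mathcal{S}}$ denotes the submatrix of $X$ formed by the columns indexed by $\bigcup_{j\in\mathcal{S}}\mathcal{G}_j$. A matrix $X^{n-1}$ with $n$ rows satisfies the sparse Riesz condition $\mathrm{SRC}(r,c_*,c^* )$, where $0<c_*<c^*<\infty$, if for every $\mathcal{S}\subset\{1,\ldots,p\}$ with $|\mathcal{S}|=r$ and every $\nu\in\mathbb{R}^{\sum_{j\in\mathcal{S}}d_j}$, $c_*\|\nu\|_2^2\le \|X^{n-1}_{*\mathcal{S}}\nu\|_2^2/n\le c^*\|\nu\|_2^2$. *)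

(* Defs.v *)
From HB Require Import structures.
From mathcomp Require Import all_boot all_order all_algebra.
Set Implicit Arguments. Unset Strict Implicit. Unset Printing Implicit Defensive.
Import Order.TTheory GRing.Theory Num.Theory.
Local Open Scope ring_scope.

(* Coordinates are 'I_m (0-based), groups are 'I_p; the group partition
   G_1..G_p is encoded by the map g sending a coordinate to its group. *)

Definition sqnorm (R : realFieldType) (k : nat) (v : 'rV[R]_k) : R :=
  \sum_(j < k) v 0 j ^+ 2.

Definition grp_cols (m p : nat) (g : 'I_m -> 'I_p) (S : {set 'I_p}) : {set 'I_m} :=
  [set i | g i \in S].

Definition subcols (R : realFieldType) (n m p : nat) (g : 'I_m -> 'I_p)
  (X : 'M[R]_(n, m)) (S : {set 'I_p}) : 'M[R]_(n, #|grp_cols g S|) :=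
  colsub (fun k : 'I_#|grp_cols g S| => enum_val k) X.

Definition SRC (R : realFieldType) (n m p : nat) (g : 'I_m -> 'I_p)
  (X : 'M[R]_(n, m)) (r : nat) (cl cu : R) : Prop :=
  0 < cl /\ cl < cu /\
  forall S : {set 'I_p}, #|S| = r ->
  forall nu : 'cV[R]_#|grp_cols g S|,
    cl * sqnorm nu^T <= sqnorm (subcols g X S *m nu)^T / n%:R
    /\ sqnorm (subcols g X S *m nu)^T / n%:R <= cu * sqnorm nu^T.

(* X^{n-1}: the n x m matrix whose rows are x^0, ..., x^{n-1} *)
Definition Xmat (R : realFieldType) (m : nat) (x : nat -> 'rV[R]_m) (n : nat)
  : 'M[R]_(n, m) := \matrix_(i < n, j < m) x i 0 j.

(* Main.v *)
Require Import Defs.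
From HB Require Import structures.
From mathcomp Require Import all_boot all_order all_algebra.
From mathcomp Require Import ring lra.
Import Order.TTheory GRing.Theory Num.Theory.
Local Open Scope ring_scope.

Lemma cs_fin {R : realFieldType} {k : nat} (a b : 'I_k -> R) :
  (\sum_i a i * b i) ^+ 2 <= (\sum_i a i ^+ 2) * (\sum_i b i ^+ 2).
Proof.
have H0 : 0 <= \sum_i \sum_j (a i * b j - a j * b i) ^+ 2.
  by apply: sumr_ge0 => i _; apply: sumr_ge0 => j _; exact: sqr_ge0.
have E : forall i, \sum_j (a i * b j - a j * b i) ^+ 2 =
   \sum_j (a i ^+ 2 * b j ^+ 2) + \sum_j (a j ^+ 2 * b i ^+ 2)
   - 2 * \sum_j ((a i * b i) * (a j * b j)).
  move=> i.
  rewrite (eq_bigr (fun j => a i ^+ 2 * b j ^+ 2 + a j ^+ 2 * b i ^+ 2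
     - 2 * ((a i * b i) * (a j * b j)))); last by move=> j _; ring.
  by rewrite sumrB big_split mulr_sumr.
rewrite (eq_bigr _ (fun i _ => E i)) in H0.
rewrite sumrB big_split -mulr_sumr /= in H0.
have P1 : \sum_i \sum_j a i ^+ 2 * b j ^+ 2 = (\sum_i a i ^+ 2) * (\sum_i b i ^+ 2).
  by rewrite mulr_suml; apply: eq_bigr => i _; rewrite mulr_sumr.
have P2 : \sum_i \sum_j a j ^+ 2 * b i ^+ 2 = (\sum_i a i ^+ 2) * (\sum_i b i ^+ 2).
  by rewrite exchange_big.
have P3 : \sum_i \sum_j (a i * b i) * (a j * b j) = (\sum_i a i * b i) ^+ 2.
  by rewrite expr2 mulr_suml; apply: eq_bigr => i _; rewrite mulr_sumr.
rewrite P1 P2 P3 in H0.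
lra.
Qed.

Theorem proposition2 (R : realFieldType) (m p : nat) (g : 'I_m -> 'I_p)
  (Hg : forall j : 'I_p, exists i : 'I_m, g i = j)
  (x : nat -> 'rV[R]_m) (B : R) (HB : 0 < B)
  (Hx : forall n : nat, sqnorm (x n) <= B)
  (N' r : nat) (cl cu : R) (HN' : (1 <= N')%N)
  (Hsrc : SRC g (Xmat x N') r cl cu)
  (c : R) (Hc : 1 < c) :
  forall n' : nat, (N' < n')%N -> n'%:R <= c * N'%:R ->
    SRC g (Xmat x n') r (cl / c) (Num.max cu B).
Proof.
move=> n' ltNn lenc.
case: Hsrc => [clp [clcu Hs]].
have c0 : 0 < c by lra.
have clc : cl / c < cl.
  by rewrite ltr_pdivrMr // -[X in X < _]mulr1 ltr_pM2l.
split; first exact: divr_gt0.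
split; first by apply: (lt_le_trans clc); rewrite le_max (ltW clcu).
move=> S HS nu.
have [Hl Hu] := Hs S HS nu.
set F := fun i : nat => (\sum_(k < #|grp_cols g S|) x i 0 (enum_val k) * nu k 0) ^+ 2.
have rows : forall n, sqnorm (subcols g (Xmat x n) S *m nu)^T = \sum_(0 <= i < n) F i.
  move=> n; rewrite big_mkord /sqnorm; apply: eq_bigr => i _.
  rewrite !mxE /F; congr (_ ^+ 2); apply: eq_bigr => k _; rewrite !mxE.
  by [].
set t := sqnorm nu^T.
have t0 : 0 <= t by apply: sumr_ge0 => i _; exact: sqr_ge0.
have Fge0 : forall i, 0 <= F i by move=> i; exact: sqr_ge0.
have tE : t = \sum_(k < #|grp_cols g S|) nu k 0 ^+ 2.
  by rewrite /t /sqnorm; apply: eq_bigr => j _; rewrite mxE.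
have Fle : forall i, F i <= B * t.
  move=> i; rewrite /F.
  have H := cs_fin (fun k => x i 0 (enum_val k)) (fun k => nu k 0). apply: (le_trans H).
  rewrite tE; apply: ler_wpM2r.
    by apply: sumr_ge0 => j _; exact: sqr_ge0.
  apply: le_trans (Hx i).
  rewrite -(big_enum_val (fun j => x i 0 j ^+ 2)) /= /sqnorm big_mkcond /=.
  by apply: ler_sum => j _; case: (j \in _) => //; exact: sqr_ge0.
rewrite !rows in Hl Hu *.
rewrite (@big_cat_nat _ _ _ N') //=; last exact: ltnW.
rewrite -/t in Hl Hu.
set SN := \sum_(0 <= i < N') F i in Hl Hu *.
set T := \sum_(N' <= i < n') F i.
have N0 : 0 < N'%:R :> R by rewrite ltr0n.
have n0 : 0 < n'%:R :> R by rewrite ltr0n (leq_ltn_trans (leq0n N') ltNn).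
rewrite ler_pdivlMr // in Hl.
rewrite ler_pdivrMr // in Hu.
have T0 : 0 <= T by apply: sumr_ge0 => i _.
have TB : T <= (B * t) *+ (n' - N').
  rewrite -sumr_const_nat; exact: ler_sum => i _.
split.
  rewrite ler_pdivlMr //.
  have h1 : n'%:R / c <= N'%:R by rewrite ler_pdivrMr // mulrC.
  have h2 : cl / c * t * n'%:R = cl * t * (n'%:R / c) by ring.
  have h3 : cl * t * (n'%:R / c) <= cl * t * N'%:R.
    by apply: ler_wpM2l => //; apply: mulr_ge0 => //; exact: ltW.
  lra.
rewrite ler_pdivrMr //.
have := subnKC (ltnW ltNn); set d := (n' - N')%N => Hd.
rewrite -mulr_natr -/d in TB. rewrite -Hd natrD.
have h1 : cu * t * N'%:R <= Num.max cu B * t * N'%:R.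
  by apply: ler_wpM2r; [exact: ltW | apply: ler_wpM2r => //; rewrite le_max lexx].
have h2 : B * t * d%:R <= Num.max cu B * t * d%:R.
  by apply: ler_wpM2r; [exact: ler0n | apply: ler_wpM2r => //; rewrite le_max lexx orbT].
lra.
Qed.
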